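(* Let $(A,+,\circ)$ be a skew brace and let $t(x_1,\dots,x_n)$ be a term in the language $\{+,-,*,\bar{\ },0\}$ such that no occurrence of the variable $x_1$ lies inside a subterm whose outermost operation is $*$. Then there exists $k\in\mathbb{Z}$ such that $t(x_1+z,x_2,\dots,x_n)=t(x_1,x_2,\dots,x_n)+kz$ for every $z\in\zeta(A)$ and all $x_1,\dots,x_n\in A$.
   Context: A skew brace is a triple $(A,+,\circ)$ where $(A,+)$ and $(A,\circ)$ are groups (not necessarily abelian; $+$ is written additively) such that $x\circ(y+z)=(x\circ y)-x+(x\circ z)$ for all $x,y,z\in A$; the common neutral element is $0$, $-x$ is the $+$-inverse and $\bar x$ the $\circ$-inverse. Let $\lambda_x(y)=-x+(x\circ y)$ and $x*y=-x+(x\circ y)-y$; $[x,y]_+=x+y-x-y$. Terms are built from variables and the constant $0$ using binary $+$, binary $*$, unary $-$ and unary $\bar{\ }$ (note $x\circ y=x+(x*y)+y$, so this language is equivalent to $\{+,-,\circ,\bar{\ },0\}$). The center is $\zeta(A)=\{x\in A: x*y=y*x=[x,y]_+=0\ \forall y\in A\}=\{x\in A: x+y=y+x=x\circ y=y\circ x\ \forall y\in A\}$. For $k\in\mathbb{Z}$, $kz$ denotes the $k$-th multiple of $z$ in $(A,+)$. *)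

(* Defs.v *)
From Stdlib Require Import ZArith PeanoNat.

Record skew_brace := SkewBrace {
  carrier :> Type;
  sb_add : carrier -> carrier -> carrier;
  sb_opp : carrier -> carrier;
  sb_zero : carrier;
  sb_circ : carrier -> carrier -> carrier;
  sb_inv : carrier -> carrier;
  sb_addA : forall x y z, sb_add x (sb_add y z) = sb_add (sb_add x y) z;
  sb_add0l : forall x, sb_add sb_zero x = x;
  sb_add0r : forall x, sb_add x sb_zero = x;
  sb_addNl : forall x, sb_add (sb_opp x) x = sb_zero;
  sb_addNr : forall x, sb_add x (sb_opp x) = sb_zero;
  sb_circA : forall x y z, sb_circ x (sb_circ y z) = sb_circ (sb_circ x y) z;
  sb_circ0l : forall x, sb_circ sb_zero x = x;
  sb_circ0r : forall x, sb_circ x sb_zero = x;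
  sb_circVl : forall x, sb_circ (sb_inv x) x = sb_zero;
  sb_circVr : forall x, sb_circ x (sb_inv x) = sb_zero;
  sb_brace : forall x y z,
      sb_circ x (sb_add y z) = sb_add (sb_add (sb_circ x y) (sb_opp x)) (sb_circ x z)
}.

Section Ops.
Variable A : skew_brace.

Definition sb_star (x y : A) : A :=
  sb_add A (sb_add A (sb_opp A x) (sb_circ A x y)) (sb_opp A y).

Definition sb_comm (x y : A) : A :=
  sb_add A (sb_add A (sb_add A x y) (sb_opp A x)) (sb_opp A y).

Definition in_center (x : A) : Prop :=
  forall y : A, sb_star x y = sb_zero A /\ sb_star y x = sb_zero A
                /\ sb_comm x y = sb_zero A.

Definition sb_natmul (n : nat) (z : A) : A :=
  Nat.iter n (fun y => sb_add A z y) (sb_zero A).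

Definition sb_zmul (k : Z) (z : A) : A :=
  match k with
  | Z0 => sb_zero A
  | Zpos p => sb_natmul (Pos.to_nat p) z
  | Zneg p => sb_opp A (sb_natmul (Pos.to_nat p) z)
  end.
End Ops.

(* Terms in the language {+, -, *, bar, 0}; variables are indexed by nat,
   variable 0 playing the role of x_1. *)
Inductive term : Type :=
  | TVar : nat -> term
  | TZero : term
  | TAdd : term -> term -> term
  | TStar : term -> term -> term
  | TOpp : term -> term
  | TBar : term -> term.

Fixpoint occurs (i : nat) (t : term) : bool :=
  match t with
  | TVar j => Nat.eqb i j
  | TZero => false
  | TAdd a b | TStar a b => occurs i a || occurs i b
  | TOpp a | TBar a => occurs i a
  end.

Fixpoint not_under_star (i : nat) (t : term) : bool :=
  match t with
  | TVar _ | TZero => true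
  | TAdd a b => not_under_star i a && not_under_star i b
  | TStar a b => negb (occurs i a) && negb (occurs i b)
  | TOpp a | TBar a => not_under_star i a
  end.

Fixpoint eval (A : skew_brace) (env : nat -> A) (t : term) : A :=
  match t with
  | TVar j => env j
  | TZero => sb_zero A
  | TAdd a b => sb_add A (eval A env a) (eval A env b)
  | TStar a b => sb_star A (eval A env a) (eval A env b)
  | TOpp a => sb_opp A (eval A env a)
  | TBar a => sb_inv A (eval A env a)
  end.

Definition upd {A : Type} (env : nat -> A) (i : nat) (v : A) : nat -> A :=
  fun j => if Nat.eqb j i then v else env j.

(* Main.v *)
Require Import Defs.
From Stdlib Require Import ZArith Lia.

Section S.
Variable A : skew_brace.
Local Infix "⊕" := (sb_add A) (at level 50, left associativity).
Local Infix "⊙" := (sb_circ A) (at level 40, left associativity).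
Local Notation "⊖ x" := (sb_opp A x) (at level 35, right associativity).
Local Notation "'O'" := (sb_zero A).

Lemma addNK a b : ⊖a ⊕ (a ⊕ b) = b.
Proof. rewrite sb_addA, sb_addNl, sb_add0l; reflexivity. Qed.
Lemma addKN a b : a ⊕ (⊖a ⊕ b) = b.
Proof. rewrite sb_addA, sb_addNr, sb_add0l; reflexivity. Qed.
Lemma addrK a b : b ⊕ a ⊕ ⊖a = b.
Proof. rewrite <- sb_addA, sb_addNr, sb_add0r; reflexivity. Qed.
Lemma addrNK a b : b ⊕ ⊖a ⊕ a = b.
Proof. rewrite <- sb_addA, sb_addNl, sb_add0r; reflexivity. Qed.
Lemma opp_unique a b : a ⊕ b = O -> b = ⊖a.
Proof. intro H. rewrite <- (addNK a b), H, sb_add0r. reflexivity. Qed.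
Lemma subr0_eq a b : a ⊕ ⊖b = O -> a = b.
Proof. intro H. rewrite <- (addrNK b a), H, sb_add0l. reflexivity. Qed.
Lemma oppK a : ⊖⊖a = a.
Proof. symmetry. apply opp_unique. apply sb_addNl. Qed.
Lemma oppD a b : ⊖(a ⊕ b) = ⊖b ⊕ ⊖a.
Proof. symmetry. apply opp_unique. rewrite <- sb_addA, (sb_addA A b), sb_addNr, sb_add0l, sb_addNr. reflexivity. Qed.
Lemma opp0 : ⊖ O = O.
Proof. symmetry. apply opp_unique. apply sb_add0l. Qed.
Lemma inv_unique x y : x ⊙ y = O -> sb_inv A x = y.
Proof. intro H. rewrite <- (sb_circ0r A (sb_inv A x)), <- H, sb_circA, sb_circVl, sb_circ0l. reflexivity. Qed.
Lemma invM a b : sb_inv A (a ⊙ b) = sb_inv A b ⊙ sb_inv A a.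
Proof. apply inv_unique. rewrite <- sb_circA, (sb_circA A b), sb_circVr, sb_circ0l, sb_circVr. reflexivity. Qed.

Definition P (w : A) := forall x, x ⊙ w = x ⊕ w /\ w ⊙ x = w ⊕ x /\ w ⊕ x = x ⊕ w.

Lemma P0 : P O.
Proof. intro x. rewrite sb_circ0r, sb_circ0l, sb_add0l, sb_add0r. auto. Qed.

Lemma P_center z : in_center A z -> P z.
Proof.
  intros H x. destruct (H x) as [H1 [H2 H3]].
  unfold sb_star, sb_comm in *.
  split; [|split].
  - apply subr0_eq in H2.
    rewrite <- (addKN x (x ⊙ z)), H2. reflexivity.
  - apply subr0_eq in H1.
    rewrite <- (addKN z (z ⊙ x)), H1. reflexivity.
  - apply subr0_eq in H3. rewrite <- H3 at 2. rewrite addrNK. reflexivity.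
Qed.

Lemma P_add u v : P u -> P v -> P (u ⊕ v).
Proof.
  intros Hu Hv x. split; [|split].
  - rewrite sb_brace. rewrite (proj1 (Hu x)), (proj1 (Hv x)).
    rewrite <- (sb_addA A (x ⊕ u)), addNK, sb_addA. reflexivity.
  - rewrite <- (proj1 (Hv u)) at 1. rewrite <- sb_circA, (proj1 (proj2 (Hv x))),
      (proj1 (proj2 (Hu _))). apply sb_addA.
  - rewrite <- sb_addA, (proj2 (proj2 (Hv x))), sb_addA, (proj2 (proj2 (Hu x))).
    apply eq_sym, sb_addA.
Qed.

Lemma P_opp u : P u -> P (⊖ u).
Proof.
  intros Hu.
  assert (Hc : forall x, ⊖u ⊕ x = x ⊕ ⊖u).
  { intro x. rewrite <- (addNK u (x ⊕ ⊖u)). f_equal.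
    rewrite sb_addA, (proj2 (proj2 (Hu x))), addrK. reflexivity. }
  assert (Hr : forall x, x ⊙ ⊖u = x ⊕ ⊖u).
  { intro x. pose proof (sb_brace A x u (⊖u)) as E.
    rewrite sb_addNr, sb_circ0r, (proj1 (Hu x)), <- (proj2 (proj2 (Hu x))), addrK in E.
    rewrite <- Hc. rewrite E at 2. rewrite addNK. reflexivity. }
  intro x. split; [apply Hr|split; [|apply Hc]].
  assert (Hi : sb_inv A u = ⊖u).
  { apply inv_unique. rewrite Hr. apply sb_addNr. }
  rewrite <- Hi. rewrite <- (addKN u x) at 1.
  rewrite <- (proj1 (proj2 (Hu _))), sb_circA, sb_circVl, sb_circ0l, Hi. reflexivity.
Qed.

Lemma natmul_S n z : sb_natmul A (S n) z = z ⊕ sb_natmul A n z.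
Proof. reflexivity. Qed.

Lemma natmul_add a b z : sb_natmul A (a + b) z = sb_natmul A a z ⊕ sb_natmul A b z.
Proof.
  induction a; simpl.
  - rewrite sb_add0l; reflexivity.
  - rewrite IHa. apply sb_addA.
Qed.

Lemma P_natmul n z : P z -> P (sb_natmul A n z).
Proof. intro Hz. induction n; simpl. apply P0. now apply P_add. Qed.

Lemma zmul_ab (a b : nat) z :
  sb_natmul A a z ⊕ ⊖ sb_natmul A b z = sb_zmul A (Z.of_nat a - Z.of_nat b) z.
Proof.
  destruct (Nat.le_gt_cases b a) as [Hle|Hlt].
  - replace a with ((a - b) + b)%nat at 1 by lia.
    rewrite natmul_add, addrK.
    replace (Z.of_nat a - Z.of_nat b)%Z with (Z.of_nat (a - b)) by lia.
    destruct (a - b)%nat eqn:E; simpl. reflexivity.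
    rewrite SuccNat2Pos.id_succ. reflexivity.
  - replace b with ((b - a) + a)%nat at 1 by lia.
    rewrite natmul_add, oppD, addKN.
    replace (Z.of_nat a - Z.of_nat b)%Z with (- Z.of_nat (b - a))%Z by lia.
    destruct (b - a)%nat eqn:E; [lia|]. simpl.
    rewrite SuccNat2Pos.id_succ. reflexivity.
Qed.

Lemma eval_noocc t env v : occurs 0 t = false -> eval A (upd env 0 v) t = eval A env t.
Proof.
  induction t; simpl; intro H; try (apply Bool.orb_false_iff in H; destruct H);
    try (f_equal; auto; fail); auto.
  unfold upd. destruct n; simpl in *; [discriminate|reflexivity].
Qed.

Lemma main_aux t : not_under_star 0 t = true ->
  exists a b : nat, forall z, P z -> forall env,
    eval A (upd env 0 (env 0 ⊕ z)) t
    = eval A env t ⊕ (sb_natmul A a z ⊕ ⊖ sb_natmul A b z).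
Proof.
  induction t; simpl; intro H.
  - destruct n.
    + exists 1%nat, 0%nat. intros z Hz env. simpl. unfold upd. simpl.
      rewrite sb_add0r, opp0, sb_add0r. reflexivity.
    + exists 0%nat, 0%nat. intros z Hz env. simpl. unfold upd. simpl.
      rewrite opp0, !sb_add0r. reflexivity.
  - exists 0%nat, 0%nat. intros. simpl. rewrite opp0, !sb_add0r. reflexivity.
  - apply andb_prop in H. destruct H as [H1 H2].
    destruct (IHt1 H1) as [a [b E1]]. destruct (IHt2 H2) as [c [d E2]].
    exists (a + c)%nat, (d + b)%nat. intros z Hz env. rewrite E1, E2 by auto.
    set (na := sb_natmul A a z). set (nb := sb_natmul A b z).
    set (nc := sb_natmul A c z). set (nd := sb_natmul A d z).
    assert (Pm : P (na ⊕ ⊖nb)) by (apply P_add; [apply P_natmul|apply P_opp, P_natmul]; auto).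
    rewrite natmul_add, natmul_add. fold na nb nc nd.
    set (e1 := eval A env t1). set (e2 := eval A env t2).
    rewrite (sb_addA A (e1 ⊕ (na ⊕ ⊖ nb)) e2), <- (sb_addA A e1 (na ⊕ ⊖ nb) e2),
      (proj2 (proj2 (Pm e2))), (sb_addA A e1 e2), <- (sb_addA A (e1 ⊕ e2)).
    assert (Hnb : ⊖nb ⊕ nc = nc ⊕ ⊖nb) by apply (proj2 (proj2 (P_opp _ (P_natmul b z Hz) nc))).
    f_equal. rewrite oppD, <- (sb_addA A na), (sb_addA A (⊖ nb) nc), Hnb.
    rewrite <- (sb_addA A nc), sb_addA. reflexivity.
  - apply andb_prop in H. destruct H as [H1 H2].
    apply Bool.negb_true_iff in H1. apply Bool.negb_true_iff in H2.
    exists 0%nat, 0%nat. intros. simpl. rewrite !eval_noocc by auto.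
    rewrite opp0, !sb_add0r. reflexivity.
  - destruct (IHt H) as [a [b E]]. exists b, a. intros z Hz env.
    rewrite E by auto. rewrite !oppD, oppK.
    rewrite <- (proj2 (proj2 (P_add _ _ (P_natmul b z Hz) (P_opp _ (P_natmul a z Hz)) _))).
    reflexivity.
  - destruct (IHt H) as [a [b E]]. exists b, a. intros z Hz env.
    rewrite E by auto.
    assert (Pm : P (sb_natmul A a z ⊕ ⊖ sb_natmul A b z))
      by (apply P_add; [apply P_natmul|apply P_opp, P_natmul]; auto).
    rewrite <- (proj1 (Pm (eval A env t))), invM.
    assert (Hi : sb_inv A (sb_natmul A a z ⊕ ⊖ sb_natmul A b z)
                 = ⊖(sb_natmul A a z ⊕ ⊖ sb_natmul A b z)).
    { apply inv_unique. rewrite (proj1 (P_opp _ Pm _)). apply sb_addNr. }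
    rewrite Hi, (proj1 (proj2 (P_opp _ Pm _))), (proj2 (proj2 (P_opp _ Pm _))).
    rewrite oppD, oppK. reflexivity.
Qed.
End S.

Theorem mainTheorem15 (A : skew_brace) (t : term) :
  not_under_star 0 t = true ->
  exists k : Z, forall (z : A), in_center A z ->
    forall env : nat -> A,
      eval A (upd env 0 (sb_add A (env 0) z)) t
      = sb_add A (eval A env t) (sb_zmul A k z).
Proof.
  intro H. destruct (main_aux A t H) as [a [b E]].
  exists (Z.of_nat a - Z.of_nat b)%Z. intros z Hz env.
  rewrite E by (apply P_center; auto). rewrite zmul_ab. reflexivity.
Qed.
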